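(* Let $A=[1-\alpha^*,\alpha^*]$ with $\frac12<\alpha^*<1$, $J=[1,2]$, and for $B\subseteq\mathbb R$ let $B_{\mathbb Q}=B\cap\mathbb Q$. Let $W=\{W(t,\alpha):t\ge0,\alpha\in A\}$ be $H$-scalable, and assume that for some $q>0$, $\mathbb E\sup_{u\in J_{\mathbb Q},\alpha\in A_{\mathbb Q}}|W(u,\alpha)|^q<\infty$. Then for every rational $\delta>0$, $$\mathbb E\Big(\sup_{u\in(0,\delta]_{\mathbb Q},\alpha\in A_{\mathbb Q}}|W(u,\alpha)|^q\Big)\le\frac{\delta^{Hq}}{1-2^{-Hq}}\,\mathbb E\Big(\sup_{u\in J_{\mathbb Q},\alpha\in A_{\mathbb Q}}|W(u,\alpha)|^q\Big).$$
   Context: A process $\{W(t,\alpha):t\ge0,\alpha\in A\}$ is $H$-scalable (in $t$) if $W(0,\alpha)=0$ for all $\alpha\in A$ and, for some $H\in(0,\infty)$ and all $c\in(0,\infty)$, the processes $\{W(ct,\alpha):t\ge0,\alpha\in A\}$ and $\{c^HW(t,\alpha):t\ge0,\alpha\in A\}$ have the same finite-dimensional distributions. *)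

(* Defs.v *)
From HB Require Import structures.
From mathcomp Require Import all_boot all_order all_algebra.
From mathcomp Require Import all_classical all_reals all_analysis.
Set Implicit Arguments. Unset Strict Implicit. Unset Printing Implicit Defensive.
Import Order.TTheory GRing.Theory Num.Theory.
Import numFieldNormedType.Exports.
Local Open Scope classical_set_scope.
Local Open Scope ring_scope.

Definition is_rat {R : realType} (x : R) : Prop := exists r : rat, x = ratr r.

Definition ratpart {R : realType} (B : set R) : set R := [set x | B x /\ is_rat x].

Definition supW {d} {T : measurableType d} {R : realType}
  (W : R -> R -> T -> R) (U Al : set R) (q : R) (w : T) : \bar R :=
  ereal_sup [set ((`|W u a w| `^ q)%:E) | u in U & a in Al].


(* H-scalability: W(0,a) = 0 (a.s.) for all a in A, and for every c > 0 the
   finite-dimensional distributions of {W(ct,a)} and {c^H W(t,a)} coincide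
   (equality of the joint laws on all measurable rectangles, which generate
   the product sigma-algebra). *)
Definition H_scalable {d} {T : measurableType d} {R : realType}
  (P : probability T R) (W : R -> R -> T -> R) (A : set R) (H : R) : Prop :=
  (forall a, A a -> P [set w | W 0 a w != 0] = 0%E) /\
  (0 < H) /\
  (forall c : R, 0 < c -> forall (n : nat) (ts al : 'I_n -> R) (B : 'I_n -> set R),
     (forall i, 0 <= ts i /\ A (al i)) -> (forall i, measurable (B i)) ->
     P (\bigcap_(i in setT) [set w | B i (W (c * ts i) (al i) w)]) =
     P (\bigcap_(i in setT) [set w | B i (c `^ H * W (ts i) (al i) w)])).

(* Main.v *)
Require Import Defs.
From HB Require Import structures.
From mathcomp Require Import all_boot all_order all_algebra.
From mathcomp Require Import all_classical all_reals all_analysis.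
From mathcomp Require Import measurable_realfun.
From mathcomp Require Import ring lra.
Import Order.TTheory GRing.Theory Num.Theory.
Import numFieldNormedType.Exports.
Local Open Scope classical_set_scope.
Local Open Scope ring_scope.

Section enum.
Context {R : realType}.

Definition qpt (n : nat) : R * R :=
  match unpickle n with Some (r1, r2) => (ratr r1, ratr r2) | None => (0, 0) end.

Lemma qpt_surj (x y : R) : is_rat x -> is_rat y -> exists n, qpt n = (x, y).
Proof.
move=> [r1 ->] [r2 ->]; exists (pickle (r1, r2)).
by rewrite /qpt pickleK.
Qed.

Definition qcond (U Al : set R) n : bool := `[< U (qpt n).1 /\ Al (qpt n).2 >].

Definition phi (U Al : set R) (h : R -> R -> \bar R) n : \bar R :=
  if qcond U Al n then h (qpt n).1 (qpt n).2 else -oo%E.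

Lemma sup_enum (U Al : set R) (h : R -> R -> \bar R) :
  (forall u, U u -> is_rat u) -> (forall a, Al a -> is_rat a) ->
  ereal_sup [set h u a | u in U & a in Al] = ereal_sup (range (phi U Al h)).
Proof.
move=> hU hA; apply/eqP; rewrite eq_le; apply/andP; split.
  apply: ub_ereal_sup => _ [u Uu [a Aa <-]].
  have [n hn] := @qpt_surj u a (hU _ Uu) (hA _ Aa).
  apply: ereal_sup_ubound; exists n => //.
  by rewrite /phi /qcond hn /=; case: asboolP => // -[].
apply: ub_ereal_sup => _ [n _ <-]; rewrite /phi.
case: ifPn => [/asboolP [h1 h2]|_]; last exact: leNye.
by apply: ereal_sup_ubound; exists (qpt n).1 => //; exists (qpt n).2.
Qed.

Lemma le_sup_range (f : nat -> \bar R) (y : \bar R) :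
  (ereal_sup (range f) <= y)%E <-> (forall n, (f n <= y)%E).
Proof.
split.
  by move=> H n; apply: le_trans H; apply: ereal_sup_ubound; exists n.
by move=> H; apply: ub_ereal_sup => _ [n _ <-].
Qed.

End enum.

Section meas.
Context d (T : measurableType d) (R : realType).

Lemma measurable_sup_enum (U Al : set R) (h : R -> R -> T -> \bar R) :
  (forall u, U u -> is_rat u) -> (forall a, Al a -> is_rat a) ->
  (forall u a, measurable_fun setT (h u a)) ->
  measurable_fun setT (fun w => ereal_sup [set h u a w | u in U & a in Al]).
Proof.
move=> hU hA mh.
have -> : (fun w => ereal_sup [set h u a w | u in U & a in Al]) =
          (fun w => esups (fun n => phi U Al (fun u a => h u a w) n) 0%N).
  apply/funext => w; rewrite (sup_enum U Al (fun u a => h u a w) hU hA).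
  rewrite /esups /=.
  congr ereal_sup; apply/seteqP; split => _ [n _ <-]; by exists n.
apply: (measurable_fun_esups (f := fun n w => phi U Al (fun u a => h u a w) n)).
move=> n; rewrite /phi; case: (qcond U Al n); first exact: mh.
exact: measurable_cst.
Qed.

End meas.

Set Implicit Arguments. Unset Strict Implicit. Unset Printing Implicit Defensive.

Section law.
Context d (T : measurableType d) (R : realType) (P : probability T R).
Local Open Scope ereal_scope.

Lemma mle (h : T -> \bar R) (mh : measurable_fun setT h) (x : \bar R) :
  measurable [set w | h w <= x].
Proof.
rewrite -(setTI [set w | _]); apply: measurable_lee => //; exact: measurable_cst.
Qed.

Lemma mlt (h : T -> \bar R) (mh : measurable_fun setT h) (x : \bar R) :
  measurable [set w | h w < x].
Proof.
rewrite -(setTI [set w | _]); apply: measurable_lte => //; exact: measurable_cst.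
Qed.

Lemma mge (h : T -> \bar R) (mh : measurable_fun setT h) (x : \bar R) :
  measurable [set w | x <= h w].
Proof.
rewrite -(setTI [set w | _]); apply: measurable_lee => //; exact: measurable_cst.
Qed.

Lemma lt_bigcup (h : T -> \bar R) (h0 : forall x, 0 <= h x) (a : R) :
  [set w | h w < a%:E] = \bigcup_m [set w | h w <= (a - m.+1%:R^-1)%:E].
Proof.
apply/seteqP; split => w /=.
- move: (h0 w); case E: (h w) => [r| |] //= _.
  rewrite lte_fin => ra; have [k hk] := ltr_add_invr ra.
  by exists k => //; rewrite /= E lee_fin ltW// ltrBrDr.
- move=> [m _ /= hm]; apply: le_lt_trans hm _.
  by rewrite lte_fin gtrBl invr_gt0 ltr0n.
Qed.

Lemma nd_lt (h : T -> \bar R) (a : R) :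
  nondecreasing_seq (fun m => [set w | h w <= (a - m.+1%:R^-1)%:E]).
Proof.
move=> m n mn; apply/subsetPset => w /= hw; apply: le_trans hw _.
rewrite lee_fin lerB// lef_pV2 ?posrE ?ltr0n// ler_nat ltnS //.
Qed.

Variables (f g : T -> \bar R).
Hypotheses (mf : measurable_fun setT f) (mg : measurable_fun setT g).
Hypotheses (f0 : forall x, 0 <= f x) (g0 : forall x, 0 <= g x).
Hypothesis H : forall a : R, P [set w | f w <= a%:E] = P [set w | g w <= a%:E].

Lemma law_lt (a : R) : P [set w | f w < a%:E] = P [set w | g w < a%:E].
Proof.
rewrite (lt_bigcup f0) (lt_bigcup g0).
have Cf := nondecreasing_cvg_mu (mu := P) (fun m => mle mf (a - m.+1%:R^-1)%:E)
  (bigcup_measurable (fun m _ => mle mf _)) (nd_lt f a).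
have Cg := nondecreasing_cvg_mu (mu := P) (fun m => mle mg (a - m.+1%:R^-1)%:E)
  (bigcup_measurable (fun m _ => mle mg _)) (nd_lt g a).
have E : (P \o (fun m => [set w | g w <= (a - m.+1%:R^-1)%:E])) =
         (P \o (fun m => [set w | f w <= (a - m.+1%:R^-1)%:E])).
  by apply/funext => m /=; rewrite H.
rewrite E in Cg.
exact: (cvg_unique _ Cf Cg).
Qed.

Lemma law_ge (a : R) : P [set w | a%:E <= f w] = P [set w | a%:E <= g w].
Proof.
have E h : [set w | a%:E <= h w] = ~` [set w | h w < a%:E].
  by apply/seteqP; split => w /=; rewrite leNgt => /negP.
by rewrite !E !probability_setC ?law_lt //; exact: mlt.
Qed.

End law.

Section approx_int.
Context d (T : measurableType d) (R : realType) (P : probability T R).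
Local Open Scope ereal_scope.

Lemma approx_int (h : T -> \bar R) (mh : measurable_fun setT h) (n : nat) :
  \int[P]_x (approx setT h n x)%:E =
  \sum_(k < n * 2 ^ n) ((k%:R * 2 ^- n)%:E * P (dyadic_approx setT h n k)) +
  n%:R%:E * P (integer_approx setT h n).
Proof.
rewrite /approx.
under eq_integral do rewrite EFinD -sumEFin.
have mA k : measurable (dyadic_approx setT h n k).
  rewrite /dyadic_approx; case: ifPn => [kn|_]//; rewrite -preimage_comp.
  by apply: mh => //; apply/measurable_image_EFin; exact: measurable_itv.
have mB : measurable (integer_approx setT h n).
  by rewrite /integer_approx setTI; exact: mge.
have mF1 k : measurable_fun setT (fun x => (k%:R * 2 ^- n * \1_(dyadic_approx setT h n k) x : R)%R%:E).
  by apply/measurable_EFinP;  apply: measurable_funM => //; try exact: measurable_indic.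
have mF2 : measurable_fun setT (fun x => (n%:R * \1_(integer_approx setT h n) x : R)%R%:E).
  by apply/measurable_EFinP;  apply: measurable_funM => //; try exact: measurable_indic.
rewrite ge0_integralD //; last 2 first.
- by move=> x _; apply: sume_ge0 => k _; rewrite lee_fin mulr_ge0.
- by apply: emeasurable_sum => k.
congr (_ + _).
  rewrite ge0_integral_sum //.
  apply: eq_bigr => k _.
  under eq_integral do rewrite EFinM.
  rewrite ge0_integralZl_EFin //.
  - by rewrite integral_indic // setIT.
  - by apply/measurable_EFinP; exact: measurable_indic.
under eq_integral do rewrite EFinM.
rewrite ge0_integralZl_EFin //; last first.
  by apply/measurable_EFinP; exact: measurable_indic.
by rewrite integral_indic // setIT.
Qed.
End approx_int.

Section law2.
Context d (T : measurableType d) (R : realType) (P : probability T R).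
Local Open Scope ereal_scope.

Lemma itv_set (h : T -> \bar R) (a b : R) :
  [set x | h x \in EFin @` [set` Interval (BLeft a) (BLeft b)]] =
  [set x | a%:E <= h x] `\` [set x | b%:E <= h x].
Proof.
apply/seteqP; split => x /=.
- rewrite in_setE => -[r]; rewrite /= in_itv /= => /andP[ar rb] <-.
  split => /=; first by rewrite lee_fin.
  by rewrite lee_fin; apply/negP; rewrite -ltNge.
- move=> [ah /negP bh]; rewrite -ltNge in bh; rewrite in_setE.
  move: ah bh; case: (h x) => [r| |] //=; rewrite ?lee_fin ?lte_fin => ar rb.
  by exists r => //; rewrite /= in_itv /= ar rb.
Qed.

Variables (f g : T -> \bar R).
Hypotheses (mf : measurable_fun setT f) (mg : measurable_fun setT g).
Hypotheses (f0 : forall x, 0 <= f x) (g0 : forall x, 0 <= g x).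
Hypothesis H : forall a : R, P [set w | f w <= a%:E] = P [set w | g w <= a%:E].

Lemma law_itv (a b : R) : (a <= b)%R ->
  P [set x | f x \in EFin @` [set` Interval (BLeft a) (BLeft b)]] =
  P [set x | g x \in EFin @` [set` Interval (BLeft a) (BLeft b)]].
Proof.
move=> ab; rewrite !itv_set.
have fin h (mh : measurable_fun setT h) x : P [set w | x%:E <= h w] < +oo.
  by apply: (le_lt_trans (probability_le1 P (mge mh _))); exact: ltry.
rewrite !measureD; try exact: mge; try exact: fin.
rewrite !setIidr; last 2 first.
- by move=> x /= bx; apply: le_trans bx; rewrite lee_fin.
- by move=> x /= bx; apply: le_trans bx; rewrite lee_fin.
by congr (_ - _); exact: (law_ge mf mg f0 g0 H).
Qed.

Lemma law_integral : \int[P]_x f x = \int[P]_x g x.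
Proof.
rewrite (nd_ge0_integral_lim P (g := nnsfun_approx measurableT mf)) //; last 2 first.
- by move=> x m n mn; exact/lefP/(nd_nnsfun_approx measurableT mf mn).
- by move=> x; exact: (cvg_nnsfun_approx measurableT mf (fun x _ => f0 x)).
rewrite (nd_ge0_integral_lim P (g := nnsfun_approx measurableT mg)) //; last 2 first.
- by move=> x m n mn; exact/lefP/(nd_nnsfun_approx measurableT mg mn).
- by move=> x; exact: (cvg_nnsfun_approx measurableT mg (fun x _ => g0 x)).
congr (limn _); apply/funext => n /=.
rewrite -!integralT_nnsfun !nnsfun_approxE !approx_int //.
congr (_ + _); last first.
  by rewrite /integer_approx !setTI (law_ge mf mg f0 g0 H).
apply: eq_bigr => k _; congr (_ * _).
rewrite /dyadic_approx; case: ifPn => // _; rewrite !setTI /dyadic_itv law_itv //.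
by rewrite ler_wpM2r ?invr_ge0 ?exprn_ge0 ?ler_nat.
Qed.

End law2.

Section scale.
Context d (T : measurableType d) (R : realType) (P : probability T R).
Variables (q : R) (U Al : set R).
Hypotheses (hUr : forall u, U u -> is_rat u) (hAr : forall a, Al a -> is_rat a).
Local Open Scope ereal_scope.

Lemma mpow (G : T -> R) : measurable_fun setT G ->
  measurable_fun setT (fun w => (`|G w| `^ q)%:E).
Proof.
move=> mG; apply/measurable_EFinP.
exact: (measurableT_comp (measurable_powR q) (measurableT_comp (@normr_measurable R setT) mG)).
Qed.

Definition Fs (G : R -> R -> T -> R) w :=
  ereal_sup [set (`|G u a w| `^ q)%:E | u in U & a in Al].

Definition Eset (G : R -> R -> T -> R) (x : R) n :=
  [set w | forall i, (i < n)%N -> phi U Al (fun u a => (`|G u a w| `^ q)%:E) i <= x%:E].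

Lemma Fs_bigcap G x : [set w | Fs G w <= x%:E] = \bigcap_n Eset G x n.
Proof.
apply/seteqP; split => w /=.
- rewrite /Fs (sup_enum _ _ _ hUr hAr) => /le_sup_range Hw n _ i _; exact: Hw.
- move=> Hw; rewrite /Fs (sup_enum _ _ _ hUr hAr); apply/le_sup_range => n.
  exact: (Hw n.+1 I n (ltnSn n)).
Qed.

Lemma Eset_ni G x : nonincreasing_seq (Eset G x).
Proof.
move=> m n mn; apply/subsetPset => w /= Hw i im; apply: Hw.
exact: leq_trans im mn.
Qed.

Lemma mphi (G : R -> R -> T -> R) (mG : forall u a, measurable_fun setT (G u a)) i :
  measurable_fun setT (fun w => phi U Al (fun u a => (`|G u a w| `^ q)%:E) i).
Proof.
rewrite /phi; case: (qcond U Al i); first exact: mpow.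
exact: measurable_cst.
Qed.

Lemma mEset G (mG : forall u a, measurable_fun setT (G u a)) x n :
  measurable (Eset G x n).
Proof.
case: n => [|n].
  have -> : Eset G x 0 = setT by apply/seteqP; split => w //= _ i.
  exact: measurableT.
have -> : Eset G x n.+1 = \bigcap_(i in [set i | (i < n.+1)%N])
    [set w | phi U Al (fun u a => (`|G u a w| `^ q)%:E) i <= x%:E].
  by apply/seteqP; split => w /= Hw i; [move=> /Hw|move=> /Hw].
apply: bigcap_measurable; first by exists 0%N.
move=> i _; apply: mle; exact: mphi.
Qed.

Lemma law_from_rect G1 G2 (mG1 : forall u a, measurable_fun setT (G1 u a))
  (mG2 : forall u a, measurable_fun setT (G2 u a)) x
  (Hr : forall n, P (Eset G1 x n) = P (Eset G2 x n)) :
  P [set w | Fs G1 w <= x%:E] = P [set w | Fs G2 w <= x%:E].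
Proof.
rewrite !Fs_bigcap.
have fin G (mG : forall u a, measurable_fun setT (G u a)) : P (Eset G x 0) < +oo.
  by apply: (le_lt_trans (probability_le1 P (mEset mG x 0))); exact: ltry.
have C1 := nonincreasing_cvg_mu (fin _ mG1) (fun n => mEset mG1 x n)
  (bigcapT_measurable (fun n => mEset mG1 x n)) (Eset_ni G1 x).
have C2 := nonincreasing_cvg_mu (fin _ mG2) (fun n => mEset mG2 x n)
  (bigcapT_measurable (fun n => mEset mG2 x n)) (Eset_ni G2 x).
have E : (P \o Eset G2 x) = (P \o Eset G1 x) by apply/funext => n /=; rewrite Hr.
rewrite E in C2.
exact: (cvg_unique _ C1 C2).
Qed.

Lemma rect (W : R -> R -> T -> R) (A : set R) (Hs c : R) (c0 : (0 < c)%R) (a0 : R)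
  (Aa0 : A a0) (hUp : forall u, U u -> (0 <= u)%R) (hAA : forall a, Al a -> A a)
  (Hsc : forall c : R, (0 < c)%R -> forall (n : nat) (ts al : 'I_n -> R) (B : 'I_n -> set R),
     (forall i, (0 <= ts i)%R /\ A (al i)) -> (forall i, measurable (B i)) ->
     P (\bigcap_(i in setT) [set w | B i (W (c * ts i)%R (al i) w)]) =
     P (\bigcap_(i in setT) [set w | B i (c `^ Hs * W (ts i) (al i) w)%R])) x n :
  P (Eset (fun u a w => W (c * u)%R a w) x n) =
  P (Eset (fun u a w => c `^ Hs * W u a w)%R x n).
Proof.
pose ts (i : 'I_n) : R := if qcond U Al i then (qpt i).1 else 0%R.
pose al (i : 'I_n) := if qcond U Al i then (qpt i).2 else a0.
pose B (i : 'I_n) := if qcond U Al i then [set y : R | (`|y| `^ q)%:E <= x%:E] else setT.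
have E1 (G : R -> R -> T -> R) :
    Eset G x n = \bigcap_(i in setT) [set w | B i (G (ts i) (al i) w)].
  apply/seteqP; split => w /=.
  - move=> Hw i _; have := Hw i (ltn_ord i).
    by rewrite /phi /B /ts /al; case: (qcond U Al i).
  - move=> Hw i iltn; have := Hw (Ordinal iltn) I.
    by rewrite /phi /B /ts /al /=; case: (qcond U Al i) => // _; exact: leNye.
rewrite (E1 (fun u a w => W (c * u)%R a w)) (E1 (fun u a w => c `^ Hs * W u a w)%R).
apply: Hsc => // i.
- rewrite /ts /al /qcond; case: asboolP => [[h1 h2]|_]; split => //.
  + exact: hUp.
  + exact: hAA.
- rewrite /B; case: (qcond U Al i) => //.
  rewrite -(setTI [set y | _]); apply: measurable_lee => //; apply/measurable_EFinP.
  exact: (measurableT_comp (measurable_powR q) (@normr_measurable R setT)).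
Qed.

End scale.

Section aux.
Context {R : realType}.

Lemma is_ratM (x y : R) : is_rat x -> is_rat y -> is_rat (x * y).
Proof. by move=> [a ->] [b ->]; exists (a * b); rewrite rmorphM. Qed.

Lemma is_ratV (x : R) : is_rat x -> is_rat x^-1.
Proof. by move=> [a ->]; exists a^-1; rewrite fmorphV. Qed.

Lemma is_rat_nat n : is_rat (n%:R : R).
Proof. by exists n%:R; rewrite rmorph_nat. Qed.

Lemma is_ratX (x : R) n : is_rat x -> is_rat (x ^+ n).
Proof. by move=> [a ->]; exists (a ^+ n); rewrite rmorphXn. Qed.

Lemma find_k (del u : R) : 0 < del -> 0 < u -> u <= del ->
  exists k, del / 2 ^+ k.+1 < u /\ u <= del / 2 ^+ k.
Proof.
move=> d0 u0 ud.
have ex : exists k, del / 2 ^+ k.+1 < u.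
  exists (Num.truncn (del / u)).
  rewrite ltr_pdivrMr ?exprn_gt0 // mulrC -ltr_pdivrMr //.
  apply: (lt_le_trans (truncnS_gt _)).
  rewrite -natrX ler_nat; apply: ltnW; exact: ltn_expl.
case: (ex_minnP ex) => m Pm Hmin; exists m; split => //.
case: m Pm Hmin => [|m] Pm Hmin; first by rewrite expr0 divr1.
rewrite leNgt; apply/negP => /(Hmin m); by rewrite ltnn.
Qed.

Lemma ck_pow (del p : R) k : 0 <= del ->
  (del / 2 ^+ k.+1) `^ p = del `^ p * (2 `^ (- p)) ^+ k.+1.
Proof.
move=> d0; rewrite powRM ?invr_ge0 ?exprn_ge0 //; congr (_ * _).
rewrite -(@powR_invn _ 2) // -powRrM -powR_mulrn ?powR_ge0 // -powRrM.
by congr (_ `^ _); rewrite !mulNr mulrC.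
Qed.

Lemma geom_partial (r : R) N : (1 - r) * \sum_(0 <= k < N) r ^+ k.+1 = r - r ^+ N.+1.
Proof.
elim: N => [|N IH]; first by rewrite big_geq // mulr0 expr1 subrr.
rewrite big_nat_recr //= mulrDr IH; rewrite [r ^+ N.+2]exprS; ring.
Qed.

Lemma geom_bound (a r : R) : 0 <= a -> 0 <= r -> r < 1 ->
  (\sum_(0 <= k <oo) (a * r ^+ k.+1)%:E <= (a / (1 - r))%:E)%E.
Proof.
move=> a0 r0 r1.
apply: lime_le; first by apply: is_cvg_nneseries => n _ _; rewrite lee_fin mulr_ge0 ?exprn_ge0.
apply: nearW => N; rewrite sumEFin lee_fin -mulr_sumr.
apply: ler_wpM2l => //.
rewrite -div1r ler_pdivlMr ?subr_gt0 // mulrC geom_partial.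
have := exprn_ge0 N.+1 r0; lra.
Qed.

End aux.

Unset Implicit Arguments. Set Strict Implicit.

Theorem lemma1 (R : realType) (d : measure_display) (T : measurableType d)
  (P : probability T R) (astar H q delta : R) (W : R -> R -> T -> R) :
  1 / 2 < astar -> astar < 1 ->
  (forall t a, measurable_fun setT (W t a)) ->
  H_scalable P W `[1 - astar, astar] H ->
  0 < q ->
  (\int[P]_w supW W (ratpart `[1%R, 2%R]) (ratpart `[(1 - astar)%R, astar]) q w < +oo)%E ->
  is_rat delta -> 0 < delta ->
  (\int[P]_w supW W (ratpart `]0%R, delta]) (ratpart `[(1 - astar)%R, astar]) q w <=
   ((delta `^ (H * q)) / (1 - 2 `^ (- (H * q))))%:E *
   \int[P]_w supW W (ratpart `[1%R, 2%R]) (ratpart `[(1 - astar)%R, astar]) q w)%E.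
Proof.
move=> ha1 ha2 mW [_ [H0 Hsc]] q0 Xfin hdel d0.
set Al := ratpart `[(1 - astar)%R, astar] in Xfin *.
set J := ratpart `[1%R, 2%R] in Xfin *.
set X := (\int[P]_w supW W J Al q w)%E in Xfin *.
pose U : set R := ratpart `]1%R, 2%R].
have hAr : forall a, Al a -> is_rat a by move=> a [].
have hJr : forall a, J a -> is_rat a by move=> a [].
have hUr : forall a, U a -> is_rat a by move=> a [].
have half : Al 2^-1.
  split; last exact: is_ratV (is_rat_nat 2).
  by rewrite /= in_itv /=; apply/andP; split; lra.
have U2 : U 2.
  split; last exact: (is_rat_nat 2).
  by rewrite /= in_itv /=; apply/andP; split; lra.
have mSup (S : set R) (G : R -> R -> T -> R) : (forall u, S u -> is_rat u) ->
    (forall u a, measurable_fun setT (G u a)) ->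
    measurable_fun setT (fun w => ereal_sup [set (`|G u a w| `^ q)%:E | u in S & a in Al]).
  move=> hS mG.
  exact: (measurable_sup_enum d T R S Al (fun u a w => (`|G u a w| `^ q)%:E) hS hAr
    (fun u a => mpow q (mG u a))).
have Sup0 (S : set R) (G : R -> R -> T -> R) u a w : S u -> Al a ->
    (0 <= ereal_sup [set (`|G u a w| `^ q)%:E | u in S & a in Al])%E.
  move=> Su Aa; apply: (le_trans _ (@ereal_sup_ubound _ _ (`|G u a w| `^ q)%:E _)).
    by rewrite lee_fin powR_ge0.
  by exists u => //; exists a.
have Al_A a : Al a -> `[1 - astar, astar]%classic a by case.
have hUp u : U u -> 0 <= u.
  by case; rewrite /= in_itv /= => /andP[h _] _; apply: ltW; apply: lt_trans h.
pose c k : R := delta / 2 ^+ k.+1.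
have c0 k : 0 < c k by rewrite /c divr_gt0 // exprn_gt0.
have crat k : is_rat (c k).
  by apply: is_ratM hdel _; apply: is_ratV; apply: is_ratX; exact: (is_rat_nat 2).
pose G1 k := fun u a w => W (c k * u) a w.
pose G2 k := fun u a w => c k `^ H * W u a w.
have mG1 k u a : measurable_fun setT (G1 k u a) by exact: mW.
have mG2 k u a : measurable_fun setT (G2 k u a).
  by apply: measurable_funM => //; exact: measurable_cst.
pose F1 k := Fs q U Al (G1 k).
pose F2 k := Fs q U Al (G2 k).
have mF1 k : measurable_fun setT (F1 k) := mSup U (G1 k) hUr (mG1 k).
have mF2 k : measurable_fun setT (F2 k) := mSup U (G2 k) hUr (mG2 k).
have F10 k w : (0 <= F1 k w)%E := Sup0 U (G1 k) 2 2^-1 w U2 half.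
have F20 k w : (0 <= F2 k w)%E := Sup0 U (G2 k) 2 2^-1 w U2 half.
have mSW (S : set R) : (forall u, S u -> is_rat u) -> measurable_fun setT (supW W S Al q).
  by move=> hS; exact: (mSup S W hS mW).
have J0 w : (0 <= supW W J Al q w)%E.
  apply: (Sup0 J W 1 2^-1 w _ half); split; last exact: (is_rat_nat 1).
  by rewrite /= in_itv /=; apply/andP; split; lra.
have eqI k : (\int[P]_w F1 k w = \int[P]_w F2 k w)%E.
  apply: law_integral => //.
  move=> x; apply: (law_from_rect hUr hAr (mG1 k) (mG2 k)) => n.
  exact: (rect q (c0 k) (Al_A _ half) hUp Al_A Hsc x n).
have X0 : (0 <= X)%E by apply: integral_ge0 => w _; exact: J0.
have leF2 k : (\int[P]_w F2 k w <= (c k `^ (H * q))%:E * X)%E.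
  rewrite /X -ge0_integralZl_EFin //; try exact: powR_ge0; try exact: (mSW J hJr).
  apply: ge0_le_integral => //.
    by apply: measurable_funeM; exact: mSW.
  move=> w _; apply: ub_ereal_sup => _ [u Uu [a Aa <-]].
  rewrite /G2 normrM (ger0_norm (powR_ge0 _ _)) powRM ?powR_ge0 // -powRrM EFinM.
  apply: lee_wpmul2l; first by rewrite lee_fin powR_ge0.
  apply: ereal_sup_ubound; exists u; last by exists a.
  move: Uu => [+ ur]; rewrite /= !in_itv /= => /andP[u1 u2]; split => //.
  by rewrite /= in_itv /= u2 ltW.
have lePW w : (supW W (ratpart `]0%R, delta]) Al q w <= \sum_(0 <= k <oo) F1 k w)%E.
  apply: ub_ereal_sup => _ [u [uI ur] [a Aa <-]].
  move: uI; rewrite /= in_itv /= => /andP[u0 ud].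
  have [m [hk1 hk2]] := find_k d0 u0 ud.
  apply: (le_trans _ (nneseries_lim_ge m.+1 _)); last by move=> n _ _; exact: F10.
  rewrite big_nat_recr //=; apply: lee_paddl; first by apply: sume_ge0 => n _; exact: F10.
  apply: ereal_sup_ubound; exists (u / c m); last first.
    exists a => //; rewrite /G1 mulrC divfK //; exact: lt0r_neq0.
  split; last by apply: is_ratM ur _; exact: is_ratV.
  rewrite /= in_itv /=; apply/andP; split.
    by rewrite ltr_pdivlMr // mul1r.
  rewrite ler_pdivrMr //; apply: (le_trans hk2); rewrite /c exprS invfM.
  have -> : 2 * (delta * (2^-1 / 2 ^+ m)) = delta / 2 ^+ m.
    by field; rewrite expf_neq0.
  by [].
have mser : measurable_fun setT (fun w => (\sum_(0 <= k <oo) F1 k w)%E).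
  exact: (ge0_emeasurable_sum (P := xpredT) (fun k x _ _ => F10 k x) (fun k _ => mF1 k)).
have Sd : ratpart `]0%R, delta] delta.
  by split => //; rewrite /= in_itv /= d0 lexx.
have hSr : forall u, ratpart `]0%R, delta] u -> is_rat u by move=> u [].
apply: (le_trans (ge0_le_integral P measurableT
  (fun w _ => Sup0 (ratpart `]0%R, delta]) W delta 2^-1 w Sd half)
  (mSW _ hSr) mser (fun w _ => lePW w))).
rewrite (integral_nneseries P measurableT (fun k => mF1 k) (fun k x _ => F10 k x)).
apply: (le_trans (lee_nneseries (v := fun k => ((c k `^ (H * q))%:E * X)%E) _ _)).
- by move=> k _ _; apply: integral_ge0 => w _; exact: F10.
- by move=> k _; rewrite eqI; exact: leF2.
have Xf : X = (fine X)%:E by rewrite fineK // ge0_fin_numE.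
have -> : (\sum_(0 <= k <oo) (c k `^ (H * q))%:E * X)%E =
    (X * \sum_(0 <= k <oo) (c k `^ (H * q))%:E)%E.
  rewrite Xf -nneseriesZl; last by move=> k _; rewrite lee_fin powR_ge0.
  by apply: eq_eseriesr => k _; rewrite muleC.
rewrite muleC; apply: lee_wpmul2r => //.
have -> : (\sum_(0 <= k <oo) (c k `^ (H * q))%:E)%E =
    (\sum_(0 <= k <oo) (delta `^ (H * q) * (2 `^ (- (H * q))) ^+ k.+1)%:E)%E.
  by apply: eq_eseriesr => k _; rewrite /c ck_pow // ltW.
apply: geom_bound; [exact: powR_ge0 | exact: powR_ge0 |].
rewrite powRN invf_lt1 ?powR_gt0 //.
have h12 : (1 : R) < 2 by lra.
have := gt0_ltr_powR (mulr_gt0 H0 q0) (x := 1) (y := 2).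
rewrite powR1 => -> //; rewrite nnegrE; lra.
Qed.
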